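(* Let $t\in T_2$, let $\mathcal{T}_t$ be the variety defined by $t(x,y)=x$, let $X$ be a set, and let $A=X\mathcal{T}_t^{\,p}$ be the free $\mathcal{T}_t^{\,p}$-algebra over $X$ with semilattice replica congruence $\varrho$. Let $\theta$ be any congruence of $A$ and $\psi=\theta\vee\varrho$. Then $A/\theta$ is a semilattice sum of $\mathcal{T}_t$-algebras. More precisely, $\psi/\theta$ is the semilattice replica congruence of $A/\theta$, and every $\psi/\theta$-class $(a/\theta)/(\psi/\theta)$, $a\in A$, satisfies $t(x,y)=x$.
   Context: Standing conventions: $\Omega$-algebras are of a plural similarity type (no nullary operation symbols, at least one operation symbol of arity $\ge2$). $T_n$ is the set of $\Omega$-terms in $x_1,\dots,x_n$ in which all $n$ variables occur. An identity is regular if the same variables occur on both sides. $\mathcal{S}$ is the variety of $\Omega$-algebras satisfying all regular identities. A semilattice sum of $\mathcal{V}$-algebras is an $\Omega$-algebra $A$ with a congruence $\theta$ such that $A/\theta\in\mathcal{S}$ and each $\theta$-class (a subalgebra) is in $\mathcal{V}$. The semilattice replica congruence of $A$ is the smallest congruence $\varrho$ with $A/\varrho\in\mathcal{S}$. Prolongation: for an identity $\sigma$ of the form $u(y_1,\dots,y_n)=v(y_1,\dots,y_n)$ and $m\ge1$, $\sigma^p_m$ is the set of identities $u(r_1,\dots,r_n)=v(r_1,\dots,r_n)$ obtained by substituting $r_i(x_1,\dots,x_m)$ for $y_i$, with $r_i$ ranging over $T_m$; $\sigma^p=\bigcup_m\sigma^p_m$; $\Sigma^p=\bigcup_{\sigma\in\Sigma}\sigma^p$.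 For a variety $\mathcal{V}$, $\mathcal{V}^p$ is the variety defined by $\mathrm{Id}(\mathcal{V})^p$. *)

(* Defs.v *)
From Stdlib Require Import ClassicalEpsilon.
From mathcomp Require Import all_boot.

Set Implicit Arguments.
Unset Strict Implicit.
Unset Printing Implicit Defensive.

Record signature := Signature { op : Type; ar : op -> nat }.

Definition plural (S : signature) : Prop :=
  (forall o : op S, 0 < ar o) /\ (exists o : op S, 1 < ar o).

Inductive term (S : signature) (V : Type) : Type :=
  | Var : V -> term S V
  | App : forall o : op S, ('I_(ar o) -> term S V) -> term S V.
Arguments Var {S V} _.
Arguments App {S V} o _.

Fixpoint occurs (S : signature) (V : Type) (x : V) (u : term S V) : Prop :=
  match u with
  | Var y => x = y
  | App o f => exists i, occurs x (f i)
  end.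

Fixpoint subst (S : signature) (V W : Type) (s : V -> term S W) (u : term S V)
  : term S W :=
  match u with
  | Var x => s x
  | App o f => App o (fun i => subst s (f i))
  end.

(* T_n : terms in x_1,...,x_n (encoded as variables 0,...,n-1) in which
   all n variables occur *)
Definition inT (S : signature) (n : nat) (r : term S nat) : Prop :=
  forall x, occurs x r <-> x < n.

Definition identity (S : signature) := (term S nat * term S nat)%type.

Definition regular (S : signature) (s : identity S) : Prop :=
  forall x, occurs x s.1 <-> occurs x s.2.

Record algebra (S : signature) := Algebra {
  carrier :> Type;
  ops : forall o : op S, ('I_(ar o) -> carrier) -> carrier }.
Arguments ops {S} a o _.

Fixpoint eval (S : signature) (A : algebra S) (V : Type) (e : V -> A)
  (u : term S V) : A :=
  match u with
  | Var x => e x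
  | App o f => ops A o (fun i => eval e (f i))
  end.

Definition satisfies (S : signature) (A : algebra S) (s : identity S) : Prop :=
  forall e : nat -> A, eval e s.1 = eval e s.2.

Definition Mod (S : signature) (Sigma : identity S -> Prop) (A : algebra S)
  : Prop := forall s, Sigma s -> satisfies A s.

Definition Id (S : signature) (K : algebra S -> Prop) (s : identity S) : Prop :=
  forall B : algebra S, K B -> satisfies B s.

Definition in_S (S : signature) (A : algebra S) : Prop :=
  Mod (@regular S) A.

Definition prolongation (S : signature) (Sigma : identity S -> Prop)
  (s : identity S) : Prop :=
  exists sg : identity S, Sigma sg /\
  exists m : nat, 0 < m /\
  exists r : nat -> term S nat,
    (forall i, occurs i sg.1 \/ occurs i sg.2 -> inT m (r i)) /\
    s = (subst r sg.1, subst r sg.2).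

Definition prolonged_variety (S : signature) (K : algebra S -> Prop)
  : algebra S -> Prop := Mod (prolongation (Id K)).

Definition Tt_identity (S : signature) (t : term S nat) : identity S :=
  (t, Var 0).
Definition Tt_ids (S : signature) (t : term S nat) (s : identity S) : Prop :=
  s = Tt_identity t.
Definition Tt (S : signature) (t : term S nat) : algebra S -> Prop :=
  Mod (Tt_ids t).

Definition hom (S : signature) (A B : algebra S) (h : A -> B) : Prop :=
  forall o (f : 'I_(ar o) -> A), h (ops A o f) = ops B o (fun i => h (f i)).

Definition is_free (S : signature) (K : algebra S -> Prop) (X : Type)
  (A : algebra S) (iota : X -> A) : Prop :=
  K A /\
  (forall a : A, exists u : term S X, eval iota u = a) /\
  (forall B : algebra S, K B -> forall f : X -> B,
     exists h : A -> B, hom h /\ forall x, h (iota x) = f x).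

Definition congruence (S : signature) (A : algebra S) (r : A -> A -> Prop)
  : Prop :=
  (forall a, r a a) /\ (forall a b, r a b -> r b a) /\
  (forall a b c, r a b -> r b c -> r a c) /\
  (forall o (f g : 'I_(ar o) -> A),
     (forall i, r (f i) (g i)) -> r (ops A o f) (ops A o g)).

Definition cjoin (S : signature) (A : algebra S) (r1 r2 : A -> A -> Prop)
  (a b : A) : Prop :=
  forall c, congruence c -> (forall x y, r1 x y -> c x y) ->
            (forall x y, r2 x y -> c x y) -> c a b.

Section Quotient.
Variables (S : signature) (A : algebra S) (r : A -> A -> Prop).

Definition qcarrier := {P : A -> Prop | exists a, P = r a}.

Definition cls (a : A) : qcarrier := exist _ (r a) (ex_intro _ a erefl).

Definition rep (q : qcarrier) : A :=
  proj1_sig (constructive_indefinite_description _ (proj2_sig q)).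

Definition qops (o : op S) (F : 'I_(ar o) -> qcarrier) : qcarrier :=
  cls (ops A o (fun i => rep (F i))).

Definition quotient : algebra S := Algebra qops.
End Quotient.

(* for congruences theta <= psi of A, the congruence psi/theta of A/theta *)
Definition quot_rel (S : signature) (A : algebra S) (theta psi : A -> A -> Prop)
  (p q : quotient theta) : Prop :=
  exists a b, p = cls theta a /\ q = cls theta b /\ psi a b.

Definition is_sl_replica (S : signature) (A : algebra S) (r : A -> A -> Prop)
  : Prop :=
  congruence r /\ in_S (quotient r) /\
  (forall c, congruence c -> in_S (quotient c) -> forall a b, r a b -> c a b).

Definition class_subalgebra (S : signature) (A : algebra S)
  (r : A -> A -> Prop) (b : A) : Prop :=
  forall o (f : 'I_(ar o) -> A), (forall i, r b (f i)) -> r b (ops A o f).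

Definition class_satisfies (S : signature) (A : algebra S)
  (r : A -> A -> Prop) (b : A) (s : identity S) : Prop :=
  forall e : nat -> A, (forall i, r b (e i)) -> eval e s.1 = eval e s.2.

Definition sl_sum (S : signature) (Sigma : identity S -> Prop) (A : algebra S)
  : Prop :=
  exists c : A -> A -> Prop, congruence c /\ in_S (quotient c) /\
  forall b : A, class_subalgebra c b /\
                (forall s, Sigma s -> class_satisfies c b s).

Arguments quot_rel {S A} theta psi p q.
Arguments cls {S A} r a.

(* Main.v *)
Require Import Defs.
From Stdlib Require Import List ClassicalEpsilon Classical FunctionalExtensionality PropExtensionality ProofIrrelevance.
From mathcomp Require Import all_boot zify.

Set Implicit Arguments.
Unset Strict Implicit.

Lemma In_mem (T : eqType) (x : T) (s : seq T) : x \in s -> List.In x s.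
Proof.
elim: s => [|y s IH] //=. rewrite in_cons => /orP [/eqP ->|H]; [left|right; apply IH]; auto.
Qed.

Section Gen.
Variable S : signature.

Lemma term_has_var (hS : plural S) V (u : term S V) : exists x, occurs x u.
Proof.
induction u as [x|o f IH]. exists x; reflexivity.
destruct (IH (Ordinal (proj1 hS o))) as [x Hx]. exists x. exists (Ordinal (proj1 hS o)). exact Hx.
Qed.

Lemma occurs_subst V W (s : V -> term S W) u x :
  occurs x (subst s u) <-> exists y, occurs y u /\ occurs x (s y).
Proof.
induction u as [y|o f IH]; simpl.
- split. intro H; exists y; split; auto. intros [y0 [-> H]]; auto.
- split.
  + intros [i Hi]. apply IH in Hi. destruct Hi as [y [H1 H2]]. exists y; split; auto. exists i; auto.
  + intros [y [[i H1] H2]]. exists i. apply IH. exists y; auto.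
Qed.

Lemma eval_subst (A : algebra S) V W (s : V -> term S W) (e : W -> A) u :
  eval e (subst s u) = eval (fun x => eval e (s x)) u.
Proof.
induction u as [y|o f IH]; simpl; auto.
f_equal. apply functional_extensionality => i. apply IH.
Qed.

Lemma eval_ext (A : algebra S) V (e e' : V -> A) u :
  (forall x, occurs x u -> e x = e' x) -> eval e u = eval e' u.
Proof.
induction u as [y|o f IH]; simpl; intro H.
- apply H; reflexivity.
- f_equal. apply functional_extensionality => i. apply IH. intros x hx. apply H. exists i; auto.
Qed.

Lemma eval_cong (A : algebra S) (r : A -> A -> Prop) (hr : congruence r) V
  (e e' : V -> A) u : (forall x, r (e x) (e' x)) -> r (eval e u) (eval e' u).
Proof.
intro H. destruct hr as [_ [_ [_ hc]]].
induction u as [y|o f IH]; simpl; auto.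
Qed.

Lemma hom_eval (A B : algebra S) (h : A -> B) (hh : hom h) V (e : V -> A) u :
  h (eval e u) = eval (fun x => h (e x)) u.
Proof.
induction u as [y|o f IH]; simpl; auto.
rewrite hh. f_equal. apply functional_extensionality => i. apply IH.
Qed.

Section Quot.
Variables (A : algebra S) (r : A -> A -> Prop) (hr : congruence r).

Lemma qeq (p q : qcarrier r) : proj1_sig p = proj1_sig q -> p = q.
Proof.
destruct p as [p hp], q as [q hq]; simpl; intro E; subst. f_equal. apply proof_irrelevance.
Qed.

Lemma cls_eq a b : cls r a = cls r b <-> r a b.
Proof.
destruct hr as [Rr [Rs [Rt _]]].
split.
- intro H. have E := f_equal (@proj1_sig _ _) H. simpl in E.
  have Hb : r b b by apply Rr. rewrite -E in Hb. exact Hb.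
- intro H. apply qeq; simpl. apply functional_extensionality => x.
  apply propositional_extensionality; split; intro; eauto.
Qed.

Lemma rep_spec (q : qcarrier r) : proj1_sig q = r (rep q).
Proof.
unfold rep. case: (constructive_indefinite_description _ _) => x Hx. exact Hx.
Qed.

Lemma cls_rep (q : qcarrier r) : cls r (rep q) = q.
Proof. apply qeq; simpl; symmetry; apply rep_spec. Qed.

Lemma rep_cls a : r (rep (cls r a)) a.
Proof.
have E := rep_spec (cls r a). simpl in E.
have Ha : r a a by apply (proj1 hr). rewrite E in Ha. exact Ha.
Qed.

Lemma cls_ops o (f : 'I_(ar o) -> A) :
  cls r (ops A o f) = ops (quotient r) o (fun i => cls r (f i)).
Proof.
simpl. unfold qops. apply cls_eq. destruct hr as [_ [Rs [_ Rc]]].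
apply Rc => i. apply Rs. apply rep_cls.
Qed.

Lemma eval_cls V (e : V -> A) u :
  eval (A:=quotient r) (fun x => cls r (e x)) u = cls r (eval e u).
Proof.
induction u as [y|o f IH]; simpl; auto.
rewrite cls_ops. apply (f_equal (ops (quotient r) o)). apply functional_extensionality => i. apply IH.
Qed.

Lemma eval_q V (e : V -> quotient r) u :
  eval e u = cls r (eval (fun x => rep (e x)) u).
Proof.
rewrite -eval_cls. apply eval_ext => x _. symmetry; apply cls_rep.
Qed.

Lemma inS_iff : in_S (quotient r) <->
  (forall s, regular s -> forall e : nat -> A, r (eval e s.1) (eval e s.2)).
Proof.
split.
- intros H s hs e. have := H s hs (fun x => cls r (e x)). rewrite !eval_cls. apply cls_eq.
- intros H s hs e. rewrite !eval_q. apply cls_eq. apply H; auto.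
Qed.
End Quot.

Definition PA (X : Type) : algebra S :=
  @Algebra S (X -> Prop) (fun o f x => exists i, f i x).

Lemma evalP X V (e : V -> X -> Prop) (u : term S V) (x : X) :
  (eval (A:=PA X) e u : X -> Prop) x <-> exists v, occurs v u /\ e v x.
Proof.
induction u as [y|o f IH]; simpl.
- split. intro H; exists y; auto. intros [v [-> H]]; auto.
- split.
  + intros [i Hi]. apply IH in Hi. destruct Hi as [v [H1 H2]]. exists v; split; auto. exists i; auto.
  + intros [v [[i H1] H2]]. exists i. apply IH. exists v; auto.
Qed.

Lemma occ_prol (hS : plural S) (m : nat) (r : nat -> term S nat) (u : term S nat)
  (P : nat -> Prop) :
  (forall i, occurs i u -> inT m (r i)) ->
  (exists v, occurs v (subst r u) /\ P v) <-> (exists v, v < m /\ P v).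
Proof.
intro H. split.
- intros [v [Hv Pv]]. apply occurs_subst in Hv. destruct Hv as [y [Hy Hv]].
  exists v; split; auto. apply (H y Hy). exact Hv.
- intros [v [Hv Pv]]. destruct (term_has_var hS u) as [y Hy].
  exists v; split; auto. apply occurs_subst. exists y; split; auto. apply (H y Hy). exact Hv.
Qed.

Lemma PA_prol (hS : plural S) X Sigma : Mod (prolongation Sigma) (PA X).
Proof.
intros s [sg [_ [m [hm [r [hr ->]]]]]] e. simpl.
apply functional_extensionality => x. apply propositional_extensionality.
rewrite (evalP e (subst r sg.1) x) (evalP e (subst r sg.2) x).
rewrite (@occ_prol hS m r sg.1 (fun v => e v x) (fun i h => hr i (or_introl h))).
rewrite (@occ_prol hS m r sg.2 (fun v => e v x) (fun i h => hr i (or_intror h))).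
tauto.
Qed.
End Gen.


Definition nat2 {T : Type} (a b : T) : nat -> T :=
  fun i => match i with 0 => a | _ => b end.

Fixpoint vars (S : signature) (X : Type) (u : term S X) : list X :=
  match u with
  | Var x => x :: nil
  | App o f => List.concat (List.map (fun i => vars (f i)) (enum 'I_(ar o)))
  end.

Lemma vars_spec (S : signature) (X : Type) (u : term S X) x :
  List.In x (vars u) <-> occurs x u.
Proof.
induction u as [y|o f IH]; simpl.
- split. intros [->|[]]; reflexivity. intros ->; left; reflexivity.
- rewrite in_concat. split.
  + intros [l [Hl Hx]]. apply in_map_iff in Hl. destruct Hl as [i [<- _]].
    exists i. apply IH. exact Hx.
  + intros [i Hi]. exists (vars (f i)). split. apply in_map_iff. exists i; split; auto.
    apply In_mem. by rewrite mem_enum.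
    apply IH; exact Hi.
Qed.

Section Main.
Variables (S : signature) (hS : plural S) (t : term S nat) (ht : inT 2 t)
  (X : Type) (A : algebra S) (iota : X -> A)
  (hfree : is_free (prolonged_variety (Tt t)) iota)
  (rho : A -> A -> Prop) (hrho : is_sl_replica rho)
  (theta : A -> A -> Prop) (htheta : congruence theta)
  (hP : A -> PA S X) (hhP : hom hP) (hPi : forall x, hP (iota x) = (fun y => y = x)).

Definition tA (a b : A) : A := eval (nat2 a b) t.

Lemma eval_subst2 (e : nat -> A) r1 r2 :
  eval e (subst (nat2 r1 r2) t) = tA (eval e r1) (eval e r2).
Proof.
rewrite eval_subst. unfold tA. apply eval_ext => i _. destruct i; reflexivity.
Qed.

Lemma t_occ i : occurs i t -> i = 0 \/ i = 1.
Proof. move=> /ht H. lia. Qed.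

Lemma occ_subst2 (r1 r2 : term S nat) x :
  occurs x (subst (nat2 r1 r2) t) <-> occurs x r1 \/ occurs x r2.
Proof.
rewrite occurs_subst. split.
- intros [y [Hy Hx]]. destruct (t_occ Hy) as [->| ->]; simpl in Hx; auto.
- intros [H|H]. exists 0. split; auto. apply ht. done.
  exists 1. split; auto. apply ht. done.
Qed.

Lemma K1 m r1 r2 (h1 : inT m r1) (h2 : inT m r2) (e : nat -> A) :
  tA (eval e r1) (eval e r2) = eval e r1.
Proof.
rewrite -eval_subst2.
have H := proj1 hfree (subst (nat2 r1 r2) t, subst (nat2 r1 r2) (Var 0)).
apply H; clear H.
exists (t, Var 0). split.
{ intros B HB. apply HB. reflexivity. }
exists m. split.
{ destruct (term_has_var hS r1) as [v hv]. have := (proj1 (h1 v) hv). lia. }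
exists (nat2 r1 r2). split; [|reflexivity].
intros i [Hi|Hi].
- destruct (t_occ Hi) as [->| ->]; auto.
- simpl in Hi. subst i. exact h1.
Qed.

Lemma tA_idem a : tA a a = a.
Proof.
have inV : inT 1 (@Var S nat 0).
{ intro x; simpl; split; intro H; lia. }
exact (K1 inV inV (fun _ => a)).
Qed.

Lemma tA_cong a a' b b' : theta a a' -> theta b b' -> theta (tA a b) (tA a' b').
Proof. intros H1 H2. apply (eval_cong htheta). intros [|i]; auto. Qed.

Lemma trans_half p q r : theta (tA p q) p -> theta (tA q r) q ->
  theta (tA r q) r -> theta (tA q p) q -> theta (tA p r) p.
Proof.
intros H1 H2 H3 H4.
destruct htheta as [Tr [Ts [Tt Tc]]].
pose e3 := fun i => match i with 0 => p | 1 => q | _ => r end.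
pose w1 := subst (nat2 (Var 0) (subst (nat2 (Var 1) (Var 2)) t)) t.
pose w2 := subst (nat2 (Var 2) (subst (nat2 (Var 1) (Var 0)) t)) t.
have E1 : eval e3 w1 = tA p (tA q r) by rewrite /w1 !eval_subst2.
have E2 : eval e3 w2 = tA r (tA q p) by rewrite /w2 !eval_subst2.
have I1 : inT 3 w1.
{ intro x. rewrite /w1 occ_subst2 occ_subst2 /=. lia. }
have I2 : inT 3 w2.
{ intro x. rewrite /w2 occ_subst2 occ_subst2 /=. lia. }
have K := K1 I1 I2 e3. rewrite E1 E2 in K.
have G1 : theta (tA p (tA q r)) p.
{ apply Tt with (tA p q); auto. apply tA_cong; auto. }
have G2 : theta (tA r (tA q p)) r.
{ apply Tt with (tA r q); auto. apply tA_cong; auto. }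
apply Tt with (tA (tA p (tA q r)) (tA r (tA q p))).
- apply tA_cong; auto.
- rewrite K. exact G1.
Qed.

Lemma hP_occ u y : (hP (eval iota u) : X -> Prop) y <-> occurs y u.
Proof.
rewrite (hom_eval hhP).
transitivity (exists v, occurs v u /\ (hP (iota v) : X -> Prop) y).
apply evalP.
split.
- intros [v [Hv Hy]]. rewrite hPi in Hy. subst; auto.
- intro H. exists y; split; auto. rewrite hPi. reflexivity.
Qed.

Lemma rename (d : A) (L : list X) : exists m (idx : X -> nat) (e : nat -> A),
  (forall x, List.In x L -> e (idx x) = iota x) /\
  (forall i, (exists x, List.In x L /\ idx x = i) <-> i < m).
Proof.
induction L as [|a L IH].
- exists 0, (fun _ => 0), (fun _ => d). split. intros x [].
  intro i. split. intros [x [[] _]]. intro H; lia.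
- destruct IH as [m [idx [e [H1 H2]]]].
  destruct (classic (List.In a L)) as [Ha|Ha].
  + exists m, idx, e. split.
    * intros x [<-|Hx]; auto.
    * intro i. rewrite -H2. split.
      -- intros [x [[<-|Hx] Hi]]; eauto.
      -- intros [x [Hx Hi]]. exists x; split; auto. right; auto.
  + exists m.+1, (fun x => if excluded_middle_informative (x = a) then m else idx x),
      (fun i => if i == m then iota a else e i).
    split.
    * intros x [Ea|Hx].
      -- subst x. destruct (excluded_middle_informative (a = a)) as [Hnn|n]; simpl; [|exfalso; auto].
         by rewrite eqxx.
      -- destruct (excluded_middle_informative (x = a)) as [->|n]; simpl; [exfalso; auto|].
         have : idx x < m by apply H2; exists x; auto.
         case: eqP => [->|_]; [lia|auto].
    * intro i. split.
      -- intros [x [[Ea|Hx] Hi]].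
         ++ subst x. rewrite -Hi. destruct (excluded_middle_informative (a = a)) as [Hnn|n]; simpl; [|exfalso; auto]. lia.
         ++ rewrite -Hi. destruct (excluded_middle_informative (x = a)) as [->|n]; simpl; [exfalso; auto|].
            have : idx x < m by apply H2; exists x; auto. lia.
      -- intro Hi. have [E|Lt] : i = m \/ i < m by lia.
         ++ subst i. exists a. split; [left; auto|].
            destruct (excluded_middle_informative (a = a)) as [Hnn|n]; simpl; [auto|exfalso; auto].
         ++ destruct (proj2 (H2 i) Lt) as [x [Hx Hxi]]. exists x. split; [right; auto|].
            destruct (excluded_middle_informative (x = a)) as [->|n]; simpl; [exfalso; auto|auto].
Qed.

Lemma tA_content (u w : term S X) : (forall x, occurs x u <-> occurs x w) ->
  tA (eval iota u) (eval iota w) = eval iota u.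
Proof.
intro Huw.
destruct (rename (eval iota u) (vars u)) as [m [idx [e [H1 H2]]]].
have Eu : eval e (subst (fun x => Var (idx x)) u) = eval iota u.
{ rewrite eval_subst. apply eval_ext => x hx /=. apply H1. apply vars_spec; auto. }
have Ew : eval e (subst (fun x => Var (idx x)) w) = eval iota w.
{ rewrite eval_subst. apply eval_ext => x hx /=. apply H1. apply vars_spec. apply Huw; auto. }
have Iu : inT m (subst (fun x => Var (idx x)) u).
{ intro i. rewrite occurs_subst -H2 /=. split.
  - intros [y [Hy ->]]. exists y; split; auto. apply vars_spec; auto.
  - intros [y [Hy <-]]. exists y; split; auto. apply vars_spec; auto. }
have Iw : inT m (subst (fun x => Var (idx x)) w).
{ intro i. rewrite occurs_subst -H2 /=. split.
  - intros [y [Hy ->]]. exists y; split; auto. apply vars_spec; apply Huw; auto.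
  - intros [y [Hy <-]]. exists y; split; auto. apply Huw. apply vars_spec; auto. }
rewrite -Eu -Ew. apply (K1 Iu Iw).
Qed.

Definition kappa (a b : A) : Prop := hP a = hP b.

Lemma kappa_cong : congruence kappa.
Proof.
unfold kappa. split; [|split; [|split]].
- reflexivity.
- intros; symmetry; auto.
- intros a b c -> ->; reflexivity.
- intros o f g H. rewrite !hhP. f_equal. apply functional_extensionality => i. apply H.
Qed.

Lemma kappa_inS : in_S (quotient kappa).
Proof.
apply (inS_iff kappa_cong). intros s hs e. unfold kappa.
rewrite !(hom_eval hhP). apply functional_extensionality => x.
apply propositional_extensionality. rewrite !evalP.
split; intros [v [Hv Hx]]; exists v; split; auto; apply hs; auto.
Qed.

Lemma rho_tA a b : rho a b -> tA a b = a.
Proof.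
intro H.
have Hk : kappa a b by apply (proj2 (proj2 hrho)); [apply kappa_cong|apply kappa_inS|exact H].
destruct (proj1 (proj2 hfree) a) as [u <-].
destruct (proj1 (proj2 hfree) b) as [w <-].
apply tA_content. intro x. rewrite -hP_occ -hP_occ. unfold kappa in Hk. rewrite Hk. tauto.
Qed.


Inductive tc : A -> A -> Prop :=
  | tc1 a b : theta a b -> tc a b
  | tc2 a b : rho a b -> tc a b
  | tct a b c : tc a b -> tc b c -> tc a c.

Lemma tc_sym a b : tc a b -> tc b a.
Proof.
induction 1.
- apply tc1, htheta; auto.
- apply tc2, (proj1 hrho); auto.
- eapply tct; eauto.
Qed.

Lemma tc_one o (j : 'I_(ar o)) x y : tc x y -> forall f1 f2 : 'I_(ar o) -> A,
  (forall i, i != j -> f1 i = f2 i) -> f1 j = x -> f2 j = y ->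
  tc (ops A o f1) (ops A o f2).
Proof.
destruct htheta as [Tr [Ts [Tt Tc]]]; destruct (proj1 hrho) as [Rr [Rs [Rt Rc]]].
induction 1 as [x y H|x y H|x z y H1 IH1 H2 IH2]; intros f1 f2 Hij E1 E2.
- apply tc1. apply Tc => i. case: (eqVneq i j) => [->|ne].
  + by rewrite E1 E2.
  + rewrite Hij //.
- apply tc2. apply Rc => i. case: (eqVneq i j) => [->|ne].
  + by rewrite E1 E2.
  + rewrite Hij //.
- pose f3 := fun i => if i == j then z else f1 i.
  apply tct with (ops A o f3).
  + apply IH1; auto. intros i ne. by rewrite /f3 (negbTE ne). by rewrite /f3 eqxx.
  + apply IH2; auto. intros i ne. by rewrite /f3 (negbTE ne) Hij. by rewrite /f3 eqxx.
Qed.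

Lemma tc_cong : congruence tc.
Proof.
split; [|split; [|split]].
- intro a. apply tc1, (proj1 htheta).
- exact tc_sym.
- intros; eapply tct; eauto.
- intros o f g H.
  pose h := fun k (i : 'I_(ar o)) => if (i < k)%N then g i else f i.
  have Hk : forall k, tc (ops A o f) (ops A o (h k)).
  { elim => [|k IH].
    - have -> : h 0 = f by apply functional_extensionality.
      apply tc1, (proj1 htheta).
    - apply tct with (ops A o (h k)); auto.
      case: (ltnP k (ar o)) => Hk.
      + apply (@tc_one o (Ordinal Hk) (f (Ordinal Hk)) (g (Ordinal Hk))); auto.
        * intros i ne. rewrite /h. have ne2 : (nat_of_ord i != k) by exact ne.
          case: (ltnP i k) => H1; case: (ltnP i k.+1) => H2; auto; lia.
        * rewrite /h /=. by rewrite ltnn.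
        * rewrite /h /=. by rewrite ltnSn.
      + have -> : h k.+1 = h k.
        { apply functional_extensionality => i. rewrite /h.
          have := ltn_ord i. case: (ltnP i k) => H1; case: (ltnP i k.+1) => H2; auto; lia. }
        apply tc1, (proj1 htheta). }
  have -> : g = h (ar o).
  { apply functional_extensionality => i. by rewrite /h ltn_ord. }
  apply Hk.
Qed.

Definition tau (a b : A) : Prop := theta (tA a b) a /\ theta (tA b a) b.

Lemma tc_tau a b : tc a b -> tau a b.
Proof.
destruct htheta as [Tr [Ts [Tt Tc]]].
induction 1 as [a b H|a b H|p q r H1 [I1 J1] H2 [I2 J2]].
- split.
  + rewrite -{2}(tA_idem a). apply tA_cong; auto.
  + rewrite -{2}(tA_idem b). apply tA_cong; auto.
- split; rewrite rho_tA; auto. apply (proj1 hrho); auto.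
- split.
  + apply (trans_half I1 I2 J2 J1).
  + apply (trans_half J2 J1 I1 I2).
Qed.

Definition psi := cjoin theta rho.

Lemma psi_cong : congruence psi.
Proof.
split; [|split; [|split]]; unfold psi, cjoin.
- intros x0 c0 hc _ _. apply (proj1 hc).
- intros x0 y0 H c0 hc h1 h2. apply (proj1 (proj2 hc)). apply H; auto.
- intros x0 y0 z0 H1 H2 c0 hc h1 h2. apply (proj1 (proj2 (proj2 hc))) with y0; [apply H1|apply H2]; auto.
- intros o f g H c0 hc h1 h2. apply (proj2 (proj2 (proj2 hc))) => i. apply H; auto.
Qed.

Lemma theta_psi a b : theta a b -> psi a b.
Proof. intros H c _ h1 _. auto. Qed.
Lemma rho_psi a b : rho a b -> psi a b.
Proof. intros H c _ _ h2. auto. Qed.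

Lemma psi_tA a b : psi a b -> theta (tA a b) a.
Proof.
intro H. have : tc a b.
{ apply H. apply tc_cong. apply tc1. apply tc2. }
move=> /tc_tau [] //.
Qed.

Lemma psi_S s : regular s -> forall e : nat -> A, psi (eval e s.1) (eval e s.2).
Proof.
intros hs e. apply rho_psi. apply (proj1 (inS_iff (proj1 hrho)) (proj1 (proj2 hrho))); auto.
Qed.

Definition psi' := quot_rel theta psi.

Lemma psi'_cls a b : psi' (cls theta a) (cls theta b) <-> psi a b.
Proof.
destruct psi_cong as [Pr [Ps [Pt Pc]]].
split.
- intros [a' [b' [E1 [E2 H]]]].
  apply (cls_eq htheta) in E1. apply (cls_eq htheta) in E2.
  apply Pt with a'. apply theta_psi; auto. apply Pt with b'; auto. apply Ps, theta_psi; auto.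
- intro H. exists a, b. auto.
Qed.

Lemma psi'_rep p q : psi' p q <-> psi (rep p) (rep q).
Proof.
rewrite -{1}(cls_rep p) -{1}(cls_rep q). apply psi'_cls.
Qed.

Lemma psi'_cong : congruence psi'.
Proof.
destruct psi_cong as [Pr [Ps [Pt Pc]]].
split; [|split; [|split]].
- intro p. apply psi'_rep; auto.
- intros p q. rewrite !psi'_rep; auto.
- intros p q r. rewrite !psi'_rep; eauto.
- intros o f g H. apply psi'_cls. apply Pc => i. apply psi'_rep; auto.
Qed.

Lemma psi'_inS : in_S (quotient psi').
Proof.
apply (inS_iff psi'_cong). intros s hs e. rewrite !(eval_q htheta).
apply psi'_cls. apply psi_S; auto.
Qed.

Lemma psi'_min (c : quotient theta -> quotient theta -> Prop) :
  congruence c -> in_S (quotient c) -> forall p q, psi' p q -> c p q.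
Proof.
intros hc hcS p q. rewrite psi'_rep => H.
pose ct := fun a b => c (cls theta a) (cls theta b).
have ctc : congruence ct.
{ destruct hc as [Cr [Cs [Ct Cc]]]. split; [|split; [|split]]; unfold ct.
  - auto.
  - auto.
  - eauto.
  - intros o f g Hfg. rewrite !(cls_ops htheta). apply Cc. auto. }
have ctS : in_S (quotient ct).
{ apply (inS_iff ctc). intros s hs e. unfold ct. rewrite -!(eval_cls htheta).
  apply (proj1 (inS_iff hc) hcS); auto. }
have : ct (rep p) (rep q).
{ apply H; auto.
  - intros a b Hab. unfold ct. rewrite (proj2 (cls_eq htheta a b) Hab). apply (proj1 hc).
  - intros a b Hab. apply (proj2 (proj2 hrho)); auto. }
unfold ct. rewrite !cls_rep. auto.
Qed.

Lemma part3 a : class_satisfies psi' (cls theta a) (Tt_identity t).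
Proof.
intros e He. simpl.
destruct psi_cong as [Pr [Ps [Pt Pc]]].
rewrite (eval_q htheta).
have E : eval (fun x => rep (e x)) t = tA (rep (e 0)) (rep (e 1)).
{ apply eval_ext => i hi. destruct (t_occ hi) as [->| ->]; reflexivity. }
rewrite E. rewrite -{2}(cls_rep (e 0)). apply (cls_eq htheta).
apply psi_tA.
have H0 := proj1 (psi'_rep _ _) (He 0).
have H1 := proj1 (psi'_rep _ _) (He 1).
apply Pt with (rep (cls theta a)); auto.
Qed.

Lemma part1 : sl_sum (Tt_ids t) (quotient theta).
Proof.
exists psi'. split; [exact psi'_cong|split; [exact psi'_inS|]].
intro b. split.
- intros o f Hf.
  destruct psi'_cong as [Qr [Qs [Qt Qc]]].
  have H1 : psi' (ops (quotient theta) o f) (ops (quotient theta) o (fun _ => b)).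
  { apply Qc => i. apply Qs; auto. }
  have H2 : psi' (ops (quotient theta) o (fun _ => b)) b.
  { rewrite -{2}(cls_rep b). apply psi'_cls.
    have hs : regular (App o (fun _ => @Var S nat 0), Var 0).
    { intro x. simpl. split.
      - intros [i Hi]; auto.
      - intro Hx. exists (Ordinal (proj1 hS o)); auto. }
    exact (psi_S hs (fun _ => rep b)). }
  apply Qs. eapply Qt; eauto.
- intros s -> . rewrite -(cls_rep b). apply part3.
Qed.

End Main.


Theorem proposition4p8 (S : signature) (hS : plural S)
  (t : term S nat) (ht : inT 2 t)
  (X : Type) (A : algebra S) (iota : X -> A)
  (hfree : is_free (prolonged_variety (Tt t)) iota)
  (rho : A -> A -> Prop) (hrho : is_sl_replica rho)
  (theta : A -> A -> Prop) (htheta : congruence theta) :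
  sl_sum (Tt_ids t) (quotient theta) /\
  is_sl_replica (quot_rel theta (cjoin theta rho)) /\
  (forall a : A,
     class_satisfies (quot_rel theta (cjoin theta rho)) (cls theta a)
       (Tt_identity t)).
Proof.
destruct (proj2 (proj2 hfree) (PA S X) (PA_prol (X:=X) (Sigma:=Id (Tt t)) hS) (fun x => fun y => y = x))
  as [hP [hhP hPi]].
split; [|split].
- eapply part1; eassumption.
- split; [eapply psi'_cong; eassumption|split].
  + eapply psi'_inS; eassumption.
  + intros c hc hcS. eapply psi'_min; eassumption.
- intro a. eapply part3; eassumption.
Qed.
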